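(* For the boundary Markov chain $(M_n)$ started from any fixed initial state, almost surely \[ \limsup_{n\to\infty} \frac{M_n}{n^{2/3}\log n} < \infty . \]
   Context: The boundary Markov chain is the Markov chain $(M_n)_{n\ge0}$ on $\{0,1,2,\dots\}$ with $M_{n+1}=M_n+X_n$. Given $M_n=m$, its step $X_n$ has the law \[ \mathbb P(X_n=1\mid M_n=m)=\frac{2m+3}{3m+3}. \] For $1\le k\le m$, \[ \mathbb P(X_n=-k\mid M_n=m)=\frac{2(2k-2)!}{(k-1)!(k+1)!}\cdot\frac{m!^2(2m-2k+1)!}{(m-k)!^2(2m+1)!}. \] *)

(* Defs.v *)
From HB Require Import structures.
From mathcomp Require Import all_boot all_order all_algebra.
From mathcomp Require Import all_classical all_reals all_analysis.
Set Implicit Arguments. Unset Strict Implicit. Unset Printing Implicit Defensive.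
Import Order.TTheory GRing.Theory Num.Theory.
Local Open Scope ring_scope.
Local Open Scope classical_set_scope.

Definition bdry_step_down {R : realType} (m k : nat) : R :=
  (2 * ((2 * k - 2)`!)%:R / (((k - 1)`!)%:R * ((k + 1)`!)%:R)) *
  ((m`!)%:R ^+ 2 * ((2 * m - 2 * k + 1)`!)%:R /
   (((m - k)`!)%:R ^+ 2 * ((2 * m + 1)`!)%:R)).

Definition bdry_kernel {R : realType} (m m' : nat) : R :=
  if m' == m.+1 then (2 * m + 3)%:R / (3 * m + 3)%:R
  else if (m' < m)%N then bdry_step_down m (m - m')
  else 0.

Definition is_boundary_chain {R : realType} {d : measure_display}
    {T : measurableType d} (P : probability T R) (M : nat -> T -> nat)
    (m0 : nat) : Prop :=
  (forall n x, measurable [set w | M n w = x]) /\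
  (forall (n : nat) (x : nat -> nat),
     P [set w | forall i, (i <= n)%N -> M i w = x i] =
     ((x 0%N == m0)%:R * \prod_(i < n) bdry_kernel (x i) (x i.+1))%:E).

Definition bdry_ratio {R : realType} {T : Type} (M : nat -> T -> nat) (w : T)
    (n : nat) : \bar R :=
  (((M n w)%:R : R) / ((n%:R : R) `^ (2 / 3) * ln (n%:R : R)))%:E.

(* Main.v *)
Require Import Defs.
From HB Require Import structures.
From mathcomp Require Import all_boot all_order all_algebra.
From mathcomp Require Import all_classical all_reals all_analysis.
From mathcomp Require Import ring lra zify.
Import Order.TTheory GRing.Theory Num.Theory.
Local Open Scope ring_scope.
Local Open Scope classical_set_scope.


Section Alg.
Variable R : realType.

Fixpoint bb (n : nat) : R :=
  if n is n'.+1 then bb n' * (2 * n' + 1)%:R / (2 * n' + 2)%:R else 1.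

Lemma bbS n : bb n.+1 = bb n * (2 * n + 1)%:R / (2 * n + 2)%:R.
Proof. by []. Qed.

Lemma bb_gt0 n : 0 < bb n.
Proof.
elim: n => [|n IH]; first by rewrite /= ltr01.
by rewrite bbS divr_gt0 ?mulr_gt0 // ltr0n addn2.
Qed.

Lemma fact_bb n : ((2 * n)`!)%:R = 4 ^+ n * bb n * (n`!)%:R ^+ 2 :> R.
Proof.
elim: n => [|n IH]; first by rewrite muln0 /= fact0 expr0 !mul1r expr1n.
have -> : (2 * n.+1 = (2 * n).+2)%N by rewrite mulnS.
rewrite !factS !natrM IH bbS exprS.
rewrite -[(2*n).+2]addn2 -[(2*n).+1]addn1 -[n.+1]addn1 !natrD addn1 [4 ^+ n.+1]exprS !addr0.
field; apply/negP=> /eqP; have := ler0n R n; lra.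
Qed.

Definition ee (n : nat) : R := (2 * n + 1)%:R * bb n.
Definition aa (k : nat) : R := bb k.-1 / (2 * k * (k + 1))%:R.
Definition hh (n : nat) : R := 3 / 4 * (n * (n + 1))%:R / ee n.

Lemma ee_gt0 n : 0 < ee n.
Proof. by rewrite /ee mulr_gt0 ?bb_gt0 // ltr0n addn1. Qed.

Lemma fact_neq0 n : (n`!)%:R != 0 :> R.
Proof. by rewrite pnatr_eq0 -lt0n fact_gt0. Qed.

Lemma step_down_eq y i :
  bdry_step_down (R:=R) (y + i.+1) i.+1 = aa i.+1 * ee y / ee (y + i.+1).
Proof.
rewrite /bdry_step_down /aa /ee /=.
have -> : (2 * i.+1 - 2 = 2 * i)%N by lia.
have -> : (i.+1 - 1 = i)%N by lia.
have -> : (i.+1 + 1 = i.+2)%N by lia.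
have -> : (2 * (y + i.+1) - 2 * i.+1 + 1 = (2 * y).+1)%N by lia.
have -> : (y + i.+1 - i.+1 = y)%N by lia.
have -> : (2 * (y + i.+1) + 1 = (2 * (y + i.+1)).+1)%N by lia.
rewrite !factS !natrM !fact_bb.
have f1 := fact_neq0 i; have f2 := fact_neq0 y; have f3 := fact_neq0 (y + i.+1).
have b1 := bb_gt0 i; have b2 := bb_gt0 y; have b3 := bb_gt0 (y + i.+1).
rewrite !exprD exprS.
rewrite [4 ^+ i.+1]exprS ?natrD ?natrM -!natr1 ?natrD ?natrM.
have := ler0n R i; have := ler0n R y => hy hi.
field; repeat (apply/andP; split) => //; try exact: lt0r_neq0;
  try (rewrite expf_neq0 //); apply/negP => /eqP; lra.
Qed.


Definition LL m := \sum_(y < m) aa (m - y).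
Definition HH m := \sum_(y < m) aa (m - y) * (y.+1)%:R.
Definition GG m := \sum_(y < m) aa (m - y) * (y * y.+1)%:R.

Lemma aaS m : aa m.+1 = bb m / (2 * (m%:R + 1) * (m%:R + 2)).
Proof. rewrite /aa /= !natrM !natrD -natr1; congr (_ / _); ring. Qed.

Lemma LL_eq m : LL m = 1/3 - bb m / (3 * (m%:R + 1)).
Proof.
elim: m => [|m IH]; first by rewrite /LL big_ord0 /=; field.
rewrite /LL big_ord_recl subn0.
under eq_bigr do rewrite lift0 subSS.
rewrite -/(LL m) IH aaS bbS ?natrD ?natrM -?natr1.
have := ler0n R m => hm.
field; repeat (apply/andP; split) => //; apply/negP => /eqP; lra.
Qed.


Lemma HH_eq m : HH m = 2/3 * ((2 * m%:R + 1) * bb m / (2 * m%:R + 2) + (m%:R - 1) / 2).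
Proof.
elim: m => [|m IH]; first by rewrite /HH big_ord0 /=; field.
rewrite /HH big_ord_recl subn0.
under eq_bigr => i _ do rewrite lift0 subSS -natr1 mulrDr mulr1.
rewrite big_split /= -/(HH m) -/(LL m) IH LL_eq aaS ?natrD ?natrM -?natr1.
have := ler0n R m => hm.
field; repeat (apply/andP; split) => //; apply/negP => /eqP; lra.
Qed.

Lemma GG_eq m : GG m = (4 * ee m + (m%:R - 4) * (m%:R + 1)) / 3.
Proof.
elim: m => [|m IH]; first by rewrite /GG /ee big_ord0 /=; field.
rewrite /GG big_ord_recl subn0 mul0n mulr0 add0r.
have e i : (i.+1 * i.+2 = i * i.+1 + 2 * i.+1)%N by ring.
have e2 i : ((2 * i.+1)%:R : R) = 2 * i.+1%:R by rewrite natrM.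
under eq_bigr => i _ do rewrite lift0 subSS e natrD mulrDr e2 mulrCA.
rewrite big_split /= -/(GG m) IH -mulr_sumr -/(HH m) HH_eq /ee /= ?natrD ?natrM -?natr1.
have := ler0n R m => hm.
field; repeat (apply/andP; split) => //; apply/negP => /eqP; lra.
Qed.


Lemma hhE n : hh n = 3 / 4 * (n%:R * (n%:R + 1)) / ee n.
Proof. by rewrite /hh natrM natrD. Qed.

Lemma eeE n : ee n = (2 * n%:R + 1) * bb n.
Proof. by rewrite /ee natrD natrM. Qed.

Lemma kernel_up m : bdry_kernel (R:=R) m m.+1 = (2 * m + 3)%:R / (3 * m + 3)%:R.
Proof. by rewrite /bdry_kernel eqxx. Qed.

Lemma kernel_lt m y : (y < m)%N -> bdry_kernel (R:=R) m y = aa (m - y) * ee y / ee m.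
Proof.
move=> ym; rewrite /bdry_kernel ym.
have -> : (y == m.+1) = false by apply/negbTE; rewrite neq_ltn ltnS ltnW.
have [k ->] : exists k, m = (y + k.+1)%N by exists (m - y - 1)%N; lia.
have -> : (y + k.+1 - y = k.+1)%N by lia.
exact: step_down_eq.
Qed.

Lemma kernel_0 m y : (y != m.+1) -> (m <= y)%N -> bdry_kernel (R:=R) m y = 0.
Proof.
by move=> /negbTE h my; rewrite /bdry_kernel h ltnNge my.
Qed.

Lemma kernel_hh m : \sum_(y < m.+2) bdry_kernel m y * hh y = hh m + 1.
Proof.
have k0 : bdry_kernel (R:=R) m m = 0 by apply: kernel_0 => //; apply/eqP; lia.
rewrite !big_ord_recr /= kernel_up k0 mul0r addr0.
have -> : \sum_(i < m) bdry_kernel m (widen_ord (leqnSn m.+1) (widen_ord (leqnSn m) i)) * hh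
                (widen_ord (leqnSn m.+1) (widen_ord (leqnSn m) i))
        = 3 / 4 / ee m * GG m.
  rewrite /GG mulr_sumr; apply: eq_bigr => i _ /=.
  rewrite kernel_lt // /hh.
  have := ee_gt0 i; have := ee_gt0 m => h1 h2.
  field; apply/andP; split; exact: lt0r_neq0.
rewrite GG_eq !hhE !eeE bbS -!natr1 ?natrD ?natrM.
have := ler0n R m => hm; have := bb_gt0 m => hb.
field; repeat (apply/andP; split) => //; try exact: lt0r_neq0; apply/negP => /eqP; lra.
Qed.


Lemma aa_gt0 k : (0 < k)%N -> 0 < aa k.
Proof. by case: k => // k _; rewrite aaS divr_gt0 ?bb_gt0 // !mulr_gt0 //; apply: ltr_wpDl. Qed.

Lemma kernel_ge0 m y : 0 <= bdry_kernel (R:=R) m y.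
Proof.
have [->|ne] := eqVneq y m.+1; first by rewrite kernel_up divr_ge0.
have [ym|my] := ltnP y m; last by rewrite kernel_0.
rewrite kernel_lt //; apply: ltW; apply: divr_gt0; last exact: ee_gt0.
by apply: mulr_gt0; [apply: aa_gt0; lia| exact: ee_gt0].
Qed.

Lemma kernel_lt_gt0 m y : (y < m)%N -> 0 < bdry_kernel (R:=R) m y.
Proof.
move=> ym; rewrite kernel_lt //; apply: divr_gt0; last exact: ee_gt0.
by apply: mulr_gt0; [apply: aa_gt0; lia| exact: ee_gt0].
Qed.

Lemma kernel_up_gt0 m : 0 < bdry_kernel (R:=R) m m.+1.
Proof. by rewrite kernel_up divr_gt0 // ltr0n addn3. Qed.

Lemma kernel_big m y : (m.+1 < y)%N -> bdry_kernel (R:=R) m y = 0.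
Proof. move=> h; apply: kernel_0; [apply/eqP; lia | lia]. Qed.

Lemma hh_ge0 n : 0 <= hh n.
Proof.
rewrite hhE; apply: divr_ge0; last exact: ltW (ee_gt0 n).
by apply: mulr_ge0 => //; apply: mulr_ge0 => //; apply: addr_ge0.
Qed.

Lemma hh_gt0 n : (0 < n)%N -> 0 < hh n.
Proof.
move=> n0; rewrite hhE; apply: divr_gt0; last exact: ee_gt0.
apply: mulr_gt0 => //; apply: mulr_gt0; first by rewrite ltr0n.
by apply: ltr_wpDl.
Qed.

Lemma bb_sq n : bb n ^+ 2 * (2 * n%:R + 1) <= 1.
Proof.
elim: n => [|n IH]; first by rewrite /= expr1n mul1r mulr0 add0r.
rewrite bbS.
have e1 : ((2*n+1)%:R : R) = 2 * n%:R + 1 by rewrite natrD natrM.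
have e2 : ((2*n+2)%:R : R) = 2 * n%:R + 2 by rewrite natrD natrM.
have e3 : (n.+1%:R : R) = n%:R + 1 by rewrite -natr1.
rewrite e1 e2 e3.
have := ler0n R n => hn; have := bb_gt0 n => hb.
set b := bb n; set x := n%:R.
have hx : 0 < 2 * x + 2 by lra.
have -> : (b * (2 * x + 1) / (2 * x + 2)) ^+ 2 * (2 * (x + 1) + 1)
  = (b ^+ 2 * (2 * x + 1)) * ((2 * x + 1) * (2 * x + 3) / (2 * x + 2) ^+ 2).
  by field; apply: lt0r_neq0.
apply: (le_trans (y := b ^+ 2 * (2 * x + 1) * 1)).
  apply: ler_wpM2l; first by rewrite mulr_ge0 ?exprn_ge0 ?ltW //; lra.
  by rewrite ler_pdivrMr ?exprn_gt0 // mul1r; nra.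
by rewrite mulr1.
Qed.

Lemma hh_sq n : n%:R ^+ 3 <= 4 * hh n ^+ 2.
Proof.
rewrite hhE eeE.
have := bb_sq n; have := ler0n R n => hn; have := bb_gt0 n => hb.
set b := bb n; set x := n%:R => hbs.
have hx : 0 < 2 * x + 1 by lra.
have -> : 4 * (3 / 4 * (x * (x + 1)) / ((2 * x + 1) * b)) ^+ 2
   = (9 / 4 * (x ^+ 2 * (x + 1) ^+ 2)) / ((2 * x + 1) ^+ 2 * b ^+ 2).
  by field; apply/andP; split; apply: lt0r_neq0.
rewrite ler_pdivlMr; last by rewrite mulr_gt0 ?exprn_gt0.
have h1 : (2 * x + 1) ^+ 2 * b ^+ 2 <= 2 * x + 1.
  have -> : (2 * x + 1) ^+ 2 * b ^+ 2 = (2 * x + 1) * (b ^+ 2 * (2 * x + 1)) by ring.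
  by rewrite -[X in _ <= X]mulr1 ler_wpM2l // ltW.
have x3 : 0 <= x ^+ 3 by rewrite exprn_ge0.
apply: (le_trans (y := x ^+ 3 * (2 * x + 1))); first by rewrite ler_wpM2l.
have x2 : 0 <= x ^+ 2 by rewrite exprn_ge0.
rewrite !expr2 !exprS ?expr0 ?mulr1; nra.
Qed.

End Alg.


Section Real.
Variable R : realType.

Lemma csum n : \sum_(j < n) 1 / ((j.+2)%:R * Num.sqrt (j.+2)%:R) <= 2 - 2 / Num.sqrt (n.+1)%:R :> R.
Proof.
elim: n => [|n IH]; first by rewrite big_ord0 sqrtr1 divr1 subrr.
rewrite big_ord_recr /=.
apply: (le_trans (lerD IH (lexx _))).
set s := Num.sqrt (n.+1)%:R; set t := Num.sqrt (n.+2)%:R.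
have s0 : 0 < s by rewrite sqrtr_gt0 ltr0n.
have t0 : 0 < t by rewrite sqrtr_gt0 ltr0n.
have s2 : s ^+ 2 = (n.+1)%:R by rewrite sqr_sqrtr // ler0n.
have t2 : t ^+ 2 = (n.+2)%:R by rewrite sqr_sqrtr // ler0n.
have ts : t ^+ 2 = s ^+ 2 + 1 by rewrite t2 s2 -natr1.
rewrite -t2.
have st : s <= t by rewrite -(@ler_pXn2r _ 2) ?nnegrE ?ltW //=; rewrite ts; lra.
suff : 1 / (t ^+ 2 * t) <= 2 / s - 2 / t by lra.
have h1 : (t - s) * (t + s) = 1 by rewrite -subr_sqr ts; ring.
have h2 : 1 <= (t - s) * (2 * t) by nra.
rewrite ler_pdivrMr ?mulr_gt0 ?exprn_gt0 //.
have -> : (2 / s - 2 / t) * (t ^+ 2 * t) = 2 * t ^+ 2 * (t - s) / s.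
  by field; apply/andP; split; apply: lt0r_neq0.
rewrite ler_pdivlMr // mul1r.
nra.
Qed.


Lemma pow64 : (4 : R) ^+ 3 = 8 ^+ 2.
Proof. by rewrite -!natrX. Qed.

Lemma pow23 k t : (8 ^ t <= k)%N -> 4 ^+ t <= (k%:R : R) `^ (2 / 3).
Proof.
move=> hk; set y := (k%:R : R) `^ (2 / 3).
have y0 : 0 <= y by apply: powR_ge0.
rewrite -(@ler_pXn2r _ 3) ?nnegrE ?exprn_ge0 //=.
have -> : y ^+ 3 = (k%:R : R) ^+ 2.
  rewrite -powR_mulrn // /y -powRrM -powR_mulrn ?ler0n //; congr (_ `^ _).
  by rewrite -[2%:R]/(2 : R) -[3%:R]/(3 : R); field.
rewrite -exprM mulnC exprM pow64 -exprM mulnC exprM.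
rewrite (@ler_pXn2r _ 2) ?nnegrE ?exprn_ge0 ?ler0n //=.
by rewrite -natrX ler_nat.
Qed.

Lemma lnk k t : (8 ^ t <= k)%N -> t%:R * ln 8 <= ln (k%:R : R).
Proof.
move=> hk; have k0 : (0 < k)%N by apply: leq_trans hk; rewrite expn_gt0.
rewrite mulr_natl -lnXn // ler_ln ?posrE ?exprn_gt0 ?ltr0n //.
by rewrite -natrX ler_nat.
Qed.

Lemma hh_lower j m : (4 ^ j * j.+2 <= m)%N ->
  8 ^+ j * (j.+2)%:R * Num.sqrt (j.+2)%:R / 2 <= hh R m.
Proof.
move=> hm; set x := ((j.+2)%:R : R); set s := Num.sqrt x.
have x0 : 0 < x by rewrite ltr0n.
have s0 : 0 < s by rewrite sqrtr_gt0.
have s2 : s ^+ 2 = x by rewrite sqr_sqrtr // ltW.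
have hA : 4 ^+ j * x <= (m%:R : R) by rewrite /x -natrX -natrM ler_nat.
have hA3 : (4 ^+ j * x) ^+ 3 <= (m%:R : R) ^+ 3.
  by apply: lerXn2r => //; rewrite nnegrE ?mulr_ge0 ?exprn_ge0 ?ler0n ?ltW.
have hs := hh_sq R m.
have L0 : 0 <= 8 ^+ j * x * s / 2 by rewrite divr_ge0 // !mulr_ge0 ?exprn_ge0 // ltW.
rewrite -(@ler_pXn2r _ 2) ?nnegrE ?hh_ge0 //=.
have -> : (8 ^+ j * x * s / 2) ^+ 2 = (4 ^+ j * x) ^+ 3 / 4.
  rewrite exprMn_comm; last exact: mulrC.
  rewrite !exprMn s2 -exprM mulnC exprM -pow64 -exprM mulnC exprM.
  by field.
lra.
Qed.

End Real.


Section Prob.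
Variables (R : realType) (d : measure_display) (T : measurableType d).
Variables (P : probability T R) (M : nat -> T -> nat) (m0 : nat).
Hypothesis HM : is_boundary_chain P M m0.

Local Notation K := (bdry_kernel (R:=R)).

Definition cyl n (x : nat -> nat) := [set w | forall i, (i <= n)%N -> M i w = x i].
Definition wt n (x : nat -> nat) : R := (x 0%N == m0)%:R * \prod_(i < n) K (x i) (x i.+1).
Definition upd (x : nat -> nat) n y := fun i => if i == n then y else x i.

Lemma meas_eq i y : measurable [set w | M i w = y].
Proof. by case: HM => h _; apply: h. Qed.

Lemma meas_forall (Q : nat -> set T) : (forall i, measurable (Q i)) ->
  measurable [set w | forall i, Q i w].
Proof.
move=> mQ; have := @bigcap_measurable _ T Q setT; rewrite (_ : \bigcap_(i in setT) Q i = [set w | forall i, Q i w]).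
  by apply; [exists 0%N|move=> k _; apply: mQ].
by apply/funext => w; apply/propext; split => /= h i; [apply: h|move=> _; apply: h].
Qed.

Lemma meas_impl (b : bool) (A : set T) : measurable A -> measurable [set w | b -> A w].
Proof.
case: b => mA.
  have -> : [set w | true -> A w] = A.
    by apply/seteqP; split => w /= h; [exact: (h isT)|move=> _; exact: h].
  exact: mA.
have -> : [set w | false -> A w] = setT by apply/seteqP; split => w //= _.
exact: measurableT.
Qed.

Lemma meas_lt i a : measurable [set w | (M i w < a)%N].
Proof.
rewrite (_ : [set w | (M i w < a)%N] = \bigcup_(y in [set y | (y < a)%N]) [set w | M i w = y]).
  by apply: bigcup_measurable => k _; apply: meas_eq.
apply/funext => w; apply/propext; split => /=; first by move=> h; exists (M i w).
by case=> y /= ya ->.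
Qed.

Lemma meas_cyl n x : measurable (cyl n x).
Proof.
apply: (@meas_forall (fun i => [set w | (i <= n)%N -> M i w = x i])) => i.
exact: meas_impl (meas_eq _ _).
Qed.

Lemma P_cyl n x : P (cyl n x) = (wt n x)%:E.
Proof. by case: HM => _ h; rewrite /cyl h. Qed.

Lemma wt_upd n x y : wt n.+1 (upd x n.+1 y) = wt n x * K (x n) y.
Proof.
rewrite /wt big_ord_recr /= /upd /= eqxx.
have -> : (n == n.+1) = false by apply/negbTE; rewrite neq_ltn ltnSn.
rewrite -mulrA; congr (_ * _); congr (_ * _).
apply: eq_bigr => i _.
have -> : (i == n.+1 :> nat) = false by apply/negbTE; rewrite neq_ltn ltnS ltnW.
by have -> : (i.+1 == n.+1) = false by apply/negbTE; rewrite eqSS neq_ltn ltn_ord.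
Qed.


Lemma cyl_union n x : cyl n x = \bigcup_y cyl n.+1 (upd x n.+1 y).
Proof.
apply/seteqP; split => w /=.
  move=> h; exists (M n.+1 w) => // i; rewrite /upd.
  case: eqP => [-> //|ne] ilt; apply: h; move: ilt; rewrite leq_eqVlt => /orP[/eqP //|]; by rewrite ltnS.
case=> y _ h i ilt; have := h i (leqW ilt); rewrite /upd.
by have -> : (i == n.+1) = false by apply/negbTE; rewrite neq_ltn ltnS ilt.
Qed.

Lemma cyl_triv n x : trivIset setT (fun y => cyl n.+1 (upd x n.+1 y)).
Proof.
move=> y z _ _ [w [/= h1 h2]].
by have := h1 n.+1 (leqnn _); rewrite h2 // /upd eqxx => ->.
Qed.

Lemma wt_norm n x : wt n x = wt n x * \sum_(y < (x n).+2) K (x n) y.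
Proof.
have := P_cyl n x; rewrite cyl_union measure_semi_bigcup; first last.
- by rewrite -cyl_union; apply: meas_cyl.
- exact: cyl_triv.
- by move=> i; apply: meas_cyl.
move=> H.
rewrite (@eq_eseriesr _ _ (fun i => (wt n x * K (x n) i)%:E)) in H; last first.
  by move=> i _; rewrite -wt_upd -P_cyl.
have L : (\sum_(i <oo) (wt n x * K (x n) i)%:E
          = (wt n x * \sum_(y < (x n).+2) K (x n) y)%:E)%E.
  apply: lim_near_cst => //; exists (x n).+2 => // N /= hN.
  rewrite sumEFin; congr (_%:E); rewrite -mulr_sumr; congr (_ * _).
  rewrite big_mkord (big_ord_widen N (fun y => K (x n) y) hN).
  rewrite [LHS](bigID (fun i : 'I_N => (i < (x n).+2)%N)) /= [X in _ + X]big1 ?addr0 //.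
  move=> i; rewrite -leqNgt => hi; apply: kernel_big; lia.
by rewrite L in H; case: H.
Qed.


Lemma kernel_sum1 z : \sum_(y < z.+2) K z y = 1.
Proof.
have [n [x [xn wpos]]] : exists n x, x n = z /\ wt n x != 0.
  case: (leqP m0 z) => hz.
    exists (z - m0)%N, (fun i => m0 + i)%N; split; first by lia.
    rewrite /wt /= addn0 eqxx mul1r; apply: lt0r_neq0; apply: prodr_gt0 => i _.
    by rewrite addnS; apply: kernel_up_gt0.
  exists 1%N, (fun i => if i == 0%N then m0 else z); split => //.
  rewrite /wt /= eqxx mul1r big_ord1 /=; apply: lt0r_neq0; exact: kernel_lt_gt0.
have := wt_norm n x; rewrite xn => h.
by apply: (mulfI wpos); rewrite -h mulr1.
Qed.

Lemma sum_widen z a (f : nat -> R) : (z < a)%N -> (forall y, (z.+1 < y)%N -> f y = 0) ->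
  \sum_(y < a.+1) f y = \sum_(y < z.+2) f y.
Proof.
move=> za f0; have hN : (z.+2 <= a.+1)%N by [].
rewrite (big_ord_widen a.+1 f hN).
rewrite [LHS](bigID (fun i : 'I_a.+1 => (i < z.+2)%N)) /= [X in _ + X]big1 ?addr0 //.
move=> i; rewrite -leqNgt => hi; rewrite f0 //.
Qed.

Fixpoint V (a N z : nat) : R := if N is N'.+1 then \sum_(y < a) K z y * V a N' y else 1.

Lemma V_bound a N z : (0 < a)%N -> (z < a)%N ->
  1 - V a N z <= (hh R z + N%:R) / hh R a.
Proof.
move=> a0; have ha := @hh_gt0 R a a0.
elim: N z => [|N IH] z za.
  by rewrite /= subrr addr0 divr_ge0 // ?hh_ge0 // ltW.
have S1 : \sum_(y < a.+1) K z y = 1.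
  by rewrite (@sum_widen z a (fun y => K z y)) ?kernel_sum1 // => y hy; rewrite kernel_big.
have S2 : \sum_(y < a.+1) K z y * hh R y = hh R z + 1.
  by rewrite (@sum_widen z a (fun y => K z y * hh R y)) ?kernel_hh // => y hy; rewrite kernel_big ?mul0r.
rewrite /= -[X in X - _]S1 big_ord_recr /= addrAC -sumrB.
have -> : (hh R z + N.+1%:R) / hh R a
   = \sum_(y < a.+1) K z y * ((hh R y + N%:R) / hh R a).
  rewrite (_ : \sum_(y < a.+1) K z y * ((hh R y + N%:R) / hh R a)
     = \sum_(y < a.+1) (K z y * hh R y / hh R a + N%:R / hh R a * K z y)); last first.
    by apply: eq_bigr => i _; field; exact: lt0r_neq0.
  rewrite big_split /= -mulr_suml -mulr_sumr S1 S2 -natr1.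
  by field; exact: lt0r_neq0.
rewrite big_ord_recr /= lerD //.
  apply: ler_sum => i _; rewrite -[X in X - _]mulr1 -mulrBr.
  by apply: ler_wpM2l; [exact: kernel_ge0 | exact: IH].
rewrite -[X in X <= _]mulr1 ler_wpM2l ?kernel_ge0 //.
by rewrite ler_pdivlMr // mul1r lerDl.
Qed.

Definition Tset a n x N := cyl n x `&` [set w | forall i, (n < i <= n + N)%N -> (M i w < a)%N].

Lemma meas_T a n x N : measurable (Tset a n x N).
Proof.
apply: measurableI; first exact: meas_cyl.
apply: (@meas_forall (fun i => [set w | (n < i <= n + N)%N -> (M i w < a)%N])) => i.
exact: meas_impl (meas_lt _ _).
Qed.

Lemma P_T a N n x : P (Tset a n x N) = (wt n x * V a N (x n))%:E.
Proof.
elim: N n x => [|N IH] n x.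
  rewrite /= mulr1 -P_cyl; congr (P _); apply/seteqP; split => w /=; first by case.
  by move=> h; split => // i; lia.
have E : Tset a n x N.+1 = \big[setU/set0]_(y < a) Tset a n.+1 (upd x n.+1 y) N.
  rewrite -(bigcup_mkord a (fun y => Tset a n.+1 (upd x n.+1 y) N)); apply/seteqP; split => w /=.
    move=> [h1 h2]; exists (M n.+1 w); first by apply: h2; lia.
    split => i hi; rewrite /upd.
      case: eqP => [-> //|ne]; apply: h1; lia.
    apply: h2; lia.
  case=> y /= ya [h1 h2]; split => i hi.
    by have := h1 i (leqW hi); rewrite /upd (_ : (i == n.+1) = false) //; apply/eqP; lia.
  have [->|ne] := eqVneq i n.+1.
    by have := h1 n.+1 (leqnn _); rewrite /upd eqxx => ->.
  apply: h2; lia.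
rewrite E measure_bigsetU_ord //; last first.
- move=> i j _ _ [w [/= [h1 _] [h2 _]]].
  apply: val_inj => /=.
  by have := h1 n.+1 (leqnn _); rewrite h2 ?leqnn // /upd eqxx => ->.
- by move=> i; apply: meas_T.
transitivity (\sum_(i < a) (wt n x * K (x n) i * V a N i)%:E)%E.
  apply: eq_bigr => i _; rewrite -wt_upd.
  rewrite (_ : V a N i = V a N (upd x n.+1 i n.+1)); first exact: IH.
  by rewrite /upd eqxx.
by rewrite sumEFin /= mulr_sumr; congr (_%:E); apply: eq_bigr => i _; rewrite mulrA.
Qed.

Definition Sset a N := [set w | forall i, (i <= N)%N -> (M i w < a)%N].

Lemma meas_S a N : measurable (Sset a N).
Proof.
apply: (@meas_forall (fun i => [set w | (i <= N)%N -> (M i w < a)%N])) => i.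
exact: meas_impl (meas_lt _ _).
Qed.

Lemma P_notS a N : (m0 < a)%N ->
  (P (~` Sset a N) <= ((hh R m0 + N%:R) / hh R a)%:E)%E.
Proof.
move=> ma; rewrite probability_setC; last exact: meas_S.
have h : (P (Tset a 0 (fun=> m0) N) <= P (Sset a N))%E.
  apply: le_measure; rewrite ?inE; [exact: meas_T|exact: meas_S|].
  move=> w [h1 h2] i hi; case: i hi => [|i] hi; first by rewrite h1.
  by apply: h2; lia.
rewrite P_T /wt eqxx big_ord0 !mul1r in h.
have hb := @V_bound a N m0 (leq_ltn_trans (leq0n _) ma) ma.
move: h; case: (P (Sset a N)) => [r| |] //= h.
  rewrite -EFinB lee_fin; move: h; rewrite lee_fin; lra.
by rewrite leNye.
Qed.


Definition aj j := (4 ^ j * j.+2 + m0 + 1)%N.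
Definition Fj j := ~` Sset (aj j) (8 ^ j).

Lemma meas_F j : measurable (Fj j).
Proof. exact/measurableC/meas_S. Qed.

Lemma PF_bound j : (P (Fj j) <= (2 * (hh R m0 + 1) * (1 / ((j.+2)%:R * Num.sqrt (j.+2)%:R)))%:E)%E.
Proof.
apply: le_trans; first by apply: P_notS; rewrite /aj; lia.
rewrite lee_fin.
have haj : (4 ^ j * j.+2 <= aj j)%N by rewrite /aj; lia.
have hL := @hh_lower R j (aj j) haj.
have ha : 0 < hh R (aj j) by apply: hh_gt0; rewrite /aj; lia.
have h0 := hh_ge0 R m0.
set h := hh R (aj j) in hL ha *; set hm := hh R m0 in h0 *.
set x := ((j.+2)%:R : R) in hL *; set s := Num.sqrt x in hL *.
have x0 : 0 < x by rewrite ltr0n.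
have s0 : 0 < s by rewrite sqrtr_gt0.
have E1 : (1 : R) <= (8 ^ j)%:R by rewrite ler1n expn_gt0.
rewrite natrX in E1 *.
set E := (8 : R) ^+ j in hL E1 *.
rewrite ler_pdivrMr //.
have c0 : 0 <= 2 * (hm + 1) * (1 / (x * s)).
  apply: mulr_ge0; [apply: mulr_ge0; lra | apply: divr_ge0 => //; apply: ltW; exact: mulr_gt0].
apply: (le_trans _ (ler_wpM2l c0 hL)).
have -> : 2 * (hm + 1) * (1 / (x * s)) * (E * x * s / 2) = (hm + 1) * E.
  by field; apply/andP; split; apply: lt0r_neq0.
nra.
Qed.

Lemma sumF : (\sum_(j <oo) P (Fj j) < +oo)%E.
Proof.
apply: (@le_lt_trans _ _ ((2 * (hh R m0 + 1) * 2)%:E)); last exact: ltry.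
apply: lime_le; first by apply: is_cvg_nneseries => *; exact: measure_ge0.
apply: nearW => n /=.
apply: le_trans; first by apply: lee_sum => j _; exact: PF_bound.
rewrite sumEFin lee_fin big_mkord -mulr_sumr.
have h0 := hh_ge0 R m0.
apply: ler_wpM2l; first lra.
apply: le_trans (csum R n) _.
have : 0 <= 2 / Num.sqrt (n.+1)%:R :> R by rewrite divr_ge0 ?sqrtr_ge0.
lra.
Qed.


Lemma good_bound w n : (forall j, (n <= j)%N -> Sset (aj j) (8 ^ j) w) ->
  (limn_esup (bdry_ratio (R:=R) M w) < +oo)%E.
Proof.
move=> H.
set C : R := (m0 + 17)%:R / ln 8.
have ln8 : 0 < ln (8 : R) by apply: ln_gt0; lra.
suff hk : forall k, (8 ^ n.+1 <= k)%N -> (bdry_ratio (R:=R) M w k <= C%:E)%E.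
  apply: (@le_lt_trans _ _ C%:E); last exact: ltry.
  rewrite limn_esup_lim; apply: lime_le; first exact: is_cvg_esups.
  exists (8 ^ n.+1)%N => // m /= hm.
  apply/ereal_supP => y [k /= hk' <-]; apply: hk; exact: leq_trans hm hk'.
move=> k hk.
have k0 : (0 < k)%N by apply: leq_trans hk; rewrite expn_gt0.
set t := trunc_log 8 k.
have ht1 : (8 ^ t <= k)%N by apply: trunc_logP.
have ht2 : (k < 8 ^ t.+1)%N by apply: trunc_log_ltn.
have ht : (n.+1 <= t)%N.
  rewrite leqNgt; apply/negP => tn.
  have : (8 ^ t.+1 <= 8 ^ n.+1)%N by rewrite leq_exp2l.
  lia.
have Mk : (M k w < aj t.+1)%N by apply: (H t.+1); [lia | apply: ltnW].
have X1 : (1 <= 4 ^ t)%N by rewrite expn_gt0.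
have Mk' : (M k w <= 4 ^ t * t * (m0 + 17))%N.
  move: Mk; rewrite /aj expnS; set X := (4 ^ t)%N.
  have h1 : (X <= X * t)%N by rewrite leq_pmulr //; lia.
  have h2 : (m0 <= X * t * m0)%N by rewrite leq_pmull // muln_gt0; apply/andP; split; lia.
  nia.
rewrite /bdry_ratio lee_fin.
have p1 := @pow23 R k t ht1.
have p2 := @lnk R k t ht1.
have X0 : (0 : R) < 4 ^+ t by rewrite exprn_gt0.
have t0 : (0 : R) < t%:R by rewrite ltr0n; lia.
have D0 : (0 : R) < 4 ^+ t * (t%:R * ln 8) by apply: mulr_gt0 => //; apply: mulr_gt0.
have D1 : (4 : R) ^+ t * (t%:R * ln 8) <= (k%:R : R) `^ (2 / 3) * ln k%:R.
  apply: ler_pM; [exact: ltW X0 | apply: ltW; exact: mulr_gt0 | exact: p1 | exact: p2].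
rewrite ler_pdivrMr; last exact: lt_le_trans D0 D1.
apply: le_trans (_ : C * (4 ^+ t * (t%:R * ln 8)) <= _); last first.
  by apply: ler_wpM2l => //; rewrite /C divr_ge0 // ltW.
have -> : C * (4 ^+ t * (t%:R * ln 8)) = ((4 ^ t * t * (m0 + 17))%N)%:R.
  rewrite /C !natrM natrX natrD; field; exact: lt0r_neq0.
by rewrite ler_nat.
Qed.

Lemma main_ae : {ae P, forall w, (limn_esup (bdry_ratio (R:=R) M w) < +oo)%E}.
Proof.
exists (lim_sup_set Fj); split.
- apply: bigcap_measurable; first by exists 0%N.
  move=> k _; apply: bigcup_measurable => j _; exact: meas_F.
- apply: lim_sup_set_cvg0; [exact: meas_F | exact: sumF].
- move=> w /= hw n _; apply: contrapT => hn; apply: hw.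
  apply: (@good_bound w n) => j hj; apply: contrapT => nS; apply: hn.
  by exists j.
Qed.

End Prob.

Local Open Scope ereal_scope.

Theorem theorem3p2 (R : realType) (d : measure_display) (T : measurableType d)
    (P : probability T R) (M : nat -> T -> nat) (m0 : nat) :
  is_boundary_chain P M m0 ->
  {ae P, forall w, limn_esup (bdry_ratio (R:=R) M w) < +oo}.
Proof.
move=> HM; exact: (@main_ae R d T P M m0 HM).
Qed.
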